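(* Let $r\ge2$ and $p\ge2$ be integers, $\mathcal{A}$ the adjacency tensor of an $r$-uniform (possibly weighted) hypergraph on $n$ vertices, and $f(\mathbf{x})=(r-1)!\,\mathcal{A}\mathbf{x}^r/\|\mathbf{x}\|_p^r$. Let $\mathbf{x}_k$ be an iterate of the CSRH iteration (described in the context) with $\nabla f(\mathbf{x}_k)\neq0$, and let $\mathbf{p}_k$ be the corresponding search direction. If $0<c_1<c_2<1$, then there exists $\alpha_k>0$ such that $$f(\mathbf{x}_{k+1}(\alpha_k))\ge f(\mathbf{x}_k)+c_1\alpha_k\nabla f(\mathbf{x}_k)^\top\mathbf{p}_k,\qquad \nabla f(\mathbf{x}_{k+1}(\alpha_k))^\top\mathbf{p}_k\le c_2\nabla f(\mathbf{x}_k)^\top\mathbf{p}_k,$$ where $$\mathbf{x}_{k+1}(\alpha)=\frac{[(2-\alpha\mathbf{x}_k^\top\mathbf{p}_k)^2-\|\alpha\mathbf{p}_k\|^2]\mathbf{x}_k+4\alpha\mathbf{p}_k}{4+\|\alpha\mathbf{p}_k\|^2-(\alpha\mathbf{x}_k^\top\mathbf{p}_k)^2}.$$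
   Context: Adjacency tensor: for a weighted $r$-uniform hypergraph with vertex set $\{1,\dots,n\}$ and edge weights $s(e)>0$, $\mathcal{A}=(a_{i_1\cdots i_r})$ is symmetric with $a_{i_1\cdots i_r}=s(e)/(r-1)!$ if $\{i_1,\dots,i_r\}=e$ is an edge and $0$ otherwise; $\mathcal{A}\mathbf{x}^r=\sum a_{i_1\cdots i_r}x_{i_1}\cdots x_{i_r}$, $(\mathcal{A}\mathbf{x}^{r-1})_i=\sum a_{ii_2\cdots i_r}x_{i_2}\cdots x_{i_r}$, $\|\mathbf{x}\|_p=(\sum|x_i|^p)^{1/p}$, $\|\cdot\|$ Euclidean. $\nabla f(\mathbf{x})=\frac{r!}{\|\mathbf{x}\|_p^r}(\mathcal{A}\mathbf{x}^{r-1}-\mathcal{A}\mathbf{x}^r\|\mathbf{x}\|_p^{-p}\mathbf{x}^{\langle p-1\rangle})$ with $(\mathbf{x}^{\langle p-1\rangle})_i=|x_i|^{p-1}\mathrm{sgn}(x_i)$. CSRH iteration: fix $0<c_1<c_2<1$, $\tfrac14<\tau<1$, $\epsilon>0$, a unit vector $\mathbf{x}_0$, and $\mathbf{p}_0=\nabla f(\mathbf{x}_0)$. At step $k$, choose $\alpha_k>0$ satisfying the two (Wolfe) inequalities $f(\mathbf{x}_{k+1}(\alpha_k))\ge f(\mathbf{x}_k)+c_1\alpha_k\nabla f(\mathbf{x}_k)^\top\mathbf{p}_k$ and $\nabla f(\mathbf{x}_{k+1}(\alpha_k))^\top\mathbf{p}_k\le c_2\nabla f(\mathbf{x}_k)^\top\mathbf{p}_k$,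 with $\mathbf{x}_{k+1}(\alpha)$ given by the displayed formula; set $\mathbf{x}_{k+1}=\mathbf{x}_{k+1}(\alpha_k)$, $\mathbf{d}_k=\mathbf{x}_{k+1}-\mathbf{x}_k$, $\mathbf{y}_k=\nabla f(\mathbf{x}_{k+1})-\nabla f(\mathbf{x}_k)$, $\beta_k=\max(0,\tilde\beta_k)$ where $\tilde\beta_k=(\tau\mathbf{d}_k\|\mathbf{y}_k\|^2/(\mathbf{d}_k^\top\mathbf{y}_k)-\mathbf{y}_k)^\top\nabla f(\mathbf{x}_{k+1})/(\mathbf{d}_k^\top\mathbf{y}_k)$ if $|\mathbf{d}_k^\top\mathbf{y}_k|\ge\epsilon\|\mathbf{d}_k\|\|\mathbf{y}_k\|$ and $\tilde\beta_k=0$ otherwise, and $\mathbf{p}_{k+1}=\nabla f(\mathbf{x}_{k+1})+\beta_k\mathbf{d}_k$. All iterates are unit vectors. *)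

(* Defs.v *)
From mathcomp Require Import all_boot all_order all_algebra.
From mathcomp Require Import reals exp.
Set Implicit Arguments. Unset Strict Implicit. Unset Printing Implicit Defensive.
Import Order.TTheory GRing.Theory Num.Theory.
Local Open Scope ring_scope.

Section CSRH.
Variables (R : realType) (n r pp : nat).
Variables (E : {set {set 'I_n}}) (s : {set 'I_n} -> R).

Definition vec := 'I_n -> R.

Definition adj (t : r.-tuple 'I_n) : R :=
  if [set i in t] \in E then s [set i in t] / (r.-1)`!%:R else 0.

Definition Axr (x : vec) : R :=
  \sum_(t : r.-tuple 'I_n) adj t * \prod_(j < r) x (tnth t j).

Definition Axr1 (x : vec) (i : 'I_n) : R :=
  \sum_(t : r.-tuple 'I_n | nth i t 0 == i)
     adj t * \prod_(j < r | (0 < j)%N) x (tnth t j).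

Definition dot (x y : vec) : R := \sum_i x i * y i.

Definition normp (x : vec) : R := (\sum_i `|x i| ^+ pp) `^ (pp%:R^-1).

Definition fobj (x : vec) : R := (r.-1)`!%:R * Axr x / normp x ^+ r.

Definition xpow (x : vec) : vec := fun i => `|x i| ^+ pp.-1 * Num.sg (x i).

Definition gradf (x : vec) : vec := fun i =>
  r`!%:R / normp x ^+ r *
  (Axr1 x i - Axr x * (normp x ^+ pp)^-1 * xpow x i).

Definition xnext (x p : vec) (a : R) : vec := fun i =>
  (((2 - a * dot x p) ^+ 2 - a ^+ 2 * dot p p) * x i + 4 * a * p i)
  / (4 + a ^+ 2 * dot p p - (a * dot x p) ^+ 2).

Definition wolfe (c1 c2 : R) (x p : vec) (a : R) : Prop :=
  fobj (xnext x p a) >= fobj x + c1 * a * dot (gradf x) p /\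
  dot (gradf (xnext x p a)) p <= c2 * dot (gradf x) p.

Definition vsub (x y : vec) : vec := fun i => x i - y i.

Definition beta (tau eps : R) (x x' : vec) : R :=
  let d := vsub x' x in
  let y := vsub (gradf x') (gradf x) in
  let dy := dot d y in
  let bt :=
    if Num.sqrt (dot d d) * Num.sqrt (dot y y) * eps <= `|dy|
    then (tau * dot y y / dy * dot d (gradf x') - dot y (gradf x')) / dy
    else 0 in
  Num.max 0 bt.

Definition csrh_run (c1 c2 tau eps : R) (xs ps : nat -> vec) (als : nat -> R)
    (k : nat) : Prop :=
  dot (xs 0%N) (xs 0%N) = 1 /\
  ps 0%N = gradf (xs 0%N) /\
  forall j : nat, (j < k)%N ->
    [/\ 0 < als j, wolfe c1 c2 (xs j) (ps j) (als j),
        xs j.+1 = xnext (xs j) (ps j) (als j) &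
        ps j.+1 = (fun i => gradf (xs j.+1) i +
                     beta tau eps (xs j) (xs j.+1) * vsub (xs j.+1) (xs j) i)].

End CSRH.

(* Main.v *)
Require Import Defs.
From mathcomp Require Import all_boot all_order all_algebra all_fingroup.
From mathcomp Require Import reals exp.
From mathcomp Require Import boolp classical_sets functions filter topology normedtype derive realfun ring lra.
Import Order.TTheory GRing.Theory Num.Theory.
Import numFieldNormedType.Exports.
Set Implicit Arguments. Unset Strict Implicit. Unset Printing Implicit Defensive.
Local Open Scope ring_scope.

Section A.
Variables (R : realType) (n : nat).
Implicit Types (x y p g : vec R n).

Lemma dotC x y : dot x y = dot y x.
Proof. by apply: eq_bigr => i _; rewrite mulrC. Qed.

Lemma dot_lin2 g x p a b :
  dot g (fun i => a * x i + b * p i) = a * dot g x + b * dot g p.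
Proof.
rewrite /dot !mulr_sumr -big_split /=; apply: eq_bigr => i _; ring.
Qed.

Lemma dot_quad x p a b :
  dot (fun i => a * x i + b * p i) (fun i => a * x i + b * p i) =
  a^+2 * dot x x + 2 * a * b * dot x p + b^+2 * dot p p.
Proof.
rewrite /dot !mulr_sumr -!big_split /=; apply: eq_bigr => i _; ring.
Qed.

Lemma dot_ge0 x : 0 <= dot x x.
Proof. by apply: sumr_ge0 => i _; rewrite -expr2 sqr_ge0. Qed.

Lemma dot_sq_ge0 x : 0 <= dot x x.
Proof. exact: dot_ge0. Qed.

Lemma dot_eq0 x : dot x x = 0 -> forall i, x i = 0.
Proof.
move=> h i; have /psumr_eq0P H := h.
have : x i * x i = 0 by apply: H => // j _; rewrite -expr2 sqr_ge0.
by move/eqP; rewrite mulf_eq0 orbb => /eqP.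
Qed.

Lemma cauchy1 x p : dot x x = 1 -> dot x p ^+ 2 <= dot p p.
Proof.
move=> hx; have := dot_ge0 (fun i => (- dot x p) * x i + 1 * p i).
rewrite dot_quad hx; lra.
Qed.

End A.


Section A2.
Variables (R : realType) (n : nat).
Implicit Types (x y p g : vec R n) (a : R).

Definition Dn x p a : R := 4 + a^+2 * dot p p - (a * dot x p)^+2.
Definition uu x p a : R := (2 - a * dot x p)^+2 - a^+2 * dot p p.
Definition co1 x p a : R := uu x p a / Dn x p a.
Definition co2 x p a : R := 4 * a / Dn x p a.

Lemma xnextE x p a : xnext x p a = (fun i => co1 x p a * x i + co2 x p a * p i).
Proof.
apply/funext => i; rewrite /xnext /co1 /co2 /uu /Dn; ring.
Qed.

Lemma Dn_ge4 x p a : dot x x = 1 -> 4 <= Dn x p a.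
Proof.
move=> hx; have := cauchy1 p hx; rewrite /Dn => h.
have : 0 <= a^+2 * (dot p p - dot x p ^+ 2) by rewrite mulr_ge0 ?sqr_ge0 // subr_ge0.
rewrite exprMn; lra.
Qed.

Lemma Dn_neq0 x p a : dot x x = 1 -> Dn x p a != 0.
Proof. by move=> hx; have := Dn_ge4 p a hx; apply: contraTneq => ->; lra. Qed.

Lemma unit_next x p a : dot x x = 1 -> dot (xnext x p a) (xnext x p a) = 1.
Proof.
move=> hx; have hD := Dn_neq0 p a hx.
rewrite xnextE dot_quad hx /co1 /co2.
have hid : uu x p a ^+ 2 + 2 * uu x p a * (4 * a) * dot x p + (4 * a)^+2 * dot p p
   = Dn x p a ^+ 2 by rewrite /uu /Dn; ring.
move: hD hid; set D := Dn x p a; set u := uu x p a => hD hid.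
have -> : (u / D) ^+ 2 * 1 + 2 * (u / D) * (4 * a / D) * dot x p + (4 * a / D) ^+ 2 * dot p p
  = (u ^+ 2 + 2 * u * (4 * a) * dot x p + (4 * a) ^+ 2 * dot p p) / D^+2.
  by field.
by rewrite hid divff // expf_neq0.
Qed.

Lemma xnext0 x p : xnext x p 0 = x.
Proof.
apply/funext => i; rewrite /xnext.
have -> : (4 + 0^+2 * dot p p - (0 * dot x p)^+2 : R) = 4 by ring.
by field.
Qed.

End A2.


Section A3.
Variables (R : realType) (n r pp : nat) (E : {set {set 'I_n}}) (s : {set 'I_n} -> R).
Implicit Types (x y p g : vec R n) (a : R).

Definition Sp x : R := \sum_i `|x i| ^+ pp.

Lemma Sp_ge0 x : 0 <= Sp x.
Proof. by apply: sumr_ge0 => i _; rewrite exprn_ge0. Qed.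

Lemma Sp_gt0 x : dot x x = 1 -> 0 < Sp x.
Proof.
move=> hx; rewrite lt_def Sp_ge0 andbT; apply/eqP => /psumr_eq0P H.
have : dot x x = 0.
  apply: big1 => i _.
  have /eqP := H (fun j _ => exprn_ge0 _ (normr_ge0 _)) i isT.
  by rewrite expf_eq0 normr_eq0 => /andP [_ /eqP ->]; rewrite mul0r.
by rewrite hx; apply/eqP; rewrite oner_eq0.
Qed.

Lemma normpE x : normp pp x = Sp x `^ (pp%:R^-1).
Proof. by []. Qed.

Lemma normp_pow x : (0 < pp)%N -> normp pp x ^+ pp = Sp x.
Proof.
move=> hp; rewrite normpE -powR_mulrn ?powR_ge0 // -powRrM mulVf ?powRr1 ?Sp_ge0 //.
by rewrite pnatr_eq0 -lt0n.
Qed.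

Lemma normp_ge0 x : 0 <= normp pp x.
Proof. exact: powR_ge0. Qed.

Lemma normp_gt0 x : dot x x = 1 -> 0 < normp pp x.
Proof. by move=> hx; rewrite normpE powR_gt0 // Sp_gt0. Qed.

Lemma abs_le_normp x i : (0 < pp)%N -> `|x i| <= normp pp x.
Proof.
move=> hp.
have -> : `|x i| = (`|x i| ^+ pp) `^ (pp%:R^-1).
  by rewrite -powR_mulrn // -powRrM mulfV ?powRr1 // pnatr_eq0 -lt0n.
rewrite normpE ge0_ler_powR ?invr_ge0 ?ler0n ?exprn_ge0 ?Sp_ge0 //.
- by rewrite nnegrE exprn_ge0.
- by rewrite nnegrE Sp_ge0.
by rewrite /Sp (bigD1 i) //= lerDl sumr_ge0 // => j _; rewrite exprn_ge0.
Qed.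

Lemma xpow_dot x : (0 < pp)%N -> dot (xpow pp x) x = Sp x.
Proof.
move=> hp; apply: eq_bigr => i _; rewrite /xpow -mulrA -normrEsg -exprSr prednK //.
Qed.

Section Ord.
Variable (hr : (0 < r)%N).
Let o : 'I_r := Ordinal hr.

Lemma Axr1_dot x : dot (Axr1 r E s x) x = Axr r E s x.
Proof.
rewrite /Axr /dot.
rewrite (partition_big (fun t : r.-tuple 'I_n => tnth t o) xpredT) //=.
apply: eq_bigr => i _; rewrite /Axr1 mulr_suml.
apply: eq_big => [t|t /eqP ti].
  by rewrite (tnth_nth i).
have ti' : tnth t o = i by rewrite (tnth_nth i).
rewrite [in RHS](bigD1 o) //= ti' mulrCA mulrC; congr (_ * _); congr (_ * _).
by apply: eq_bigl => j; rewrite lt0n.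
Qed.
End Ord.

End A3.


Section A4.
Variables (R : realType) (n r pp : nat) (E : {set {set 'I_n}}) (s : {set 'I_n} -> R).
Implicit Types (x y p g v : vec R n) (a : R).

Lemma dot_gradf x v : dot (gradf r pp E s x) v =
  r`!%:R / normp pp x ^+ r * (dot (Axr1 r E s x) v -
     Axr r E s x * (normp pp x ^+ pp)^-1 * dot (xpow pp x) v).
Proof.
rewrite /dot /gradf [_ * (\sum_i xpow pp x i * v i)]mulr_sumr -sumrB mulr_sumr.
by apply: eq_bigr => i _; ring.
Qed.

Lemma grad_orth x : (0 < r)%N -> (0 < pp)%N -> dot x x = 1 ->
  dot (gradf r pp E s x) x = 0.
Proof.
move=> hr hp hx; rewrite dot_gradf Axr1_dot // xpow_dot // normp_pow //.
by rewrite -(mulrA (Axr r E s x)) mulVf ?mulr1 ?subrr ?mulr0 // gt_eqF // Sp_gt0.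
Qed.

Definition Mb : R := (r.-1)`!%:R * \sum_(t : r.-tuple 'I_n) `|adj E s t|.

Lemma fobj_bound x : (0 < pp)%N -> dot x x = 1 -> fobj r pp E s x <= Mb.
Proof.
move=> hp hx; have hN := normp_gt0 pp hx.
have hNr : 0 < normp pp x ^+ r by rewrite exprn_gt0.
have hA : `|Axr r E s x| <= (\sum_(t : r.-tuple 'I_n) `|adj E s t|) * normp pp x ^+ r.
  rewrite /Axr mulr_suml; apply: le_trans (ler_norm_sum _ _ _) _.
  apply: ler_sum => t _; rewrite normrM ler_wpM2l //.
  rewrite normr_prod.
  apply: le_trans (_ : _ <= \prod_(j < r) normp pp x) _; last by rewrite prodr_const card_ord.
  by apply: ler_prod => j _; rewrite normr_ge0 abs_le_normp.
rewrite /fobj /Mb; apply: le_trans (ler_norm _) _.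
rewrite normrM normfV normrM ger0_norm ?ler0n // (gtr0_norm hNr).
rewrite -mulrA ler_wpM2l // ler_pdivrMr //.
Qed.

End A4.


Section C.
Variables (R : realType) (n r : nat) (E : {set {set 'I_n}}) (s : {set 'I_n} -> R).
Implicit Types (w v : vec R n).
Variable (hr : (0 < r)%N).
Let o : 'I_r := Ordinal hr.

Definition swapt (j : 'I_r) (t : r.-tuple 'I_n) : r.-tuple 'I_n :=
  [tuple tnth t (tperm o j l) | l < r].

Lemma swapt_inj j : injective (swapt j).
Proof.
have K : cancel (swapt j) (swapt j).
  move=> t; apply: eq_from_tnth => l; rewrite /swapt !tnth_mktuple.
  by rewrite tpermK.
exact: can_inj K.
Qed.

Lemma adj_swapt j t : adj E s (swapt j t) = adj E s t.
Proof.
rewrite /adj; have -> : [set i in swapt j t] = [set i in t]; last by [].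
apply/setP => i; rewrite !inE; apply/idP/idP => /tnthP [l ->].
  by rewrite /swapt tnth_mktuple mem_tnth.
apply/tnthP; exists (tperm o j l); by rewrite /swapt tnth_mktuple tpermK.
Qed.

Definition Tj w v (j : 'I_r) : R :=
  \sum_(t : r.-tuple 'I_n) adj E s t * (v (tnth t j) * \prod_(l < r | l != j) w (tnth t l)).

Lemma Tj_o w v j : Tj w v j = Tj w v o.
Proof.
rewrite /Tj (reindex_inj (@swapt_inj j)); apply: eq_bigr => t _.
rewrite adj_swapt /swapt tnth_mktuple tpermR; congr (_ * (_ * _)).
rewrite [RHS](reindex_inj (@perm_inj _ (tperm o j))) /=.
apply: eq_big => [l|l _]; last by rewrite tnth_mktuple.
apply/idP/idP; apply: contra => /eqP h.
  by apply/eqP; apply: (@perm_inj _ (tperm o j)); rewrite tpermR.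
by rewrite h tpermR.
Qed.

Lemma To_dot w v : Tj w v o = dot (Axr1 r E s w) v.
Proof.
rewrite /Tj /dot.
rewrite (partition_big (fun t : r.-tuple 'I_n => tnth t o) xpredT) //=.
apply: eq_bigr => i _; rewrite /Axr1 mulr_suml.
apply: eq_big => [t|t /eqP ti].
  by rewrite (tnth_nth i).
rewrite ti (mulrC (v i)) mulrA; congr (_ * _ * _).
by apply: eq_bigl => j; rewrite lt0n.
Qed.

Lemma sym_sum w v :
  \sum_(t : r.-tuple 'I_n) adj E s t *
     \sum_(j < r) (v (tnth t j) * \prod_(l < r | l != j) w (tnth t l))
  = r%:R * dot (Axr1 r E s w) v.
Proof.
under eq_bigr do rewrite mulr_sumr.
rewrite exchange_big /=.
transitivity (\sum_(j < r) Tj w v j); first by [].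
under eq_bigr do rewrite Tj_o.
by rewrite sumr_const card_ord To_dot mulr_natl.
Qed.

End C.


Section B1.
Variable (R : realType).

Lemma isd_ext (f g : R -> R) (a d : R) : f = g -> is_derive a 1 f d -> is_derive a 1 g d.
Proof. by move=> ->. Qed.

Lemma isd_sum (I : Type) (s : seq I) (P : pred I) (F : I -> R -> R) (dF : I -> R) (a : R) :
  (forall i, P i -> is_derive a 1 (F i) (dF i)) ->
  is_derive a 1 (fun b => \sum_(i <- s | P i) F i b) (\sum_(i <- s | P i) dF i).
Proof.
move=> H; elim: s => [|i s IH].
  rewrite big_nil; apply: (isd_ext (f := fun _ => 0)).
  by apply/funext => b; rewrite big_nil.
rewrite big_cons; case: ifP => Pi.
  have h := is_deriveD (H i Pi) IH.
  by apply: (isd_ext _ h); apply/funext => b; rewrite big_cons Pi.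
by apply: (isd_ext _ IH); apply/funext => b; rewrite big_cons Pi.
Qed.

Lemma isd_prod (I : eqType) (s : seq I) (F : I -> R -> R) (dF : I -> R) (a : R) :
  uniq s -> (forall i, is_derive a 1 (F i) (dF i)) ->
  is_derive a 1 (fun b => \prod_(i <- s) F i b)
    (\sum_(i <- s) dF i * \prod_(l <- s | l != i) F l a).
Proof.
move=> + H; elim: s => [|i s IH] /=.
  move=> _; rewrite big_nil; apply: (isd_ext (f := fun _ => 1)).
  by apply/funext => b; rewrite big_nil.
move=> /andP [his us].
have h := is_deriveM (H i) (IH us).
apply: is_derive_eq; first by apply: (isd_ext _ h); apply/funext => b; rewrite big_cons.
rewrite big_cons /= big_cons /= eqxx /=.
have -> : \prod_(l <- s | l != i) F l a = \prod_(l <- s) F l a.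
  rewrite big_seq_cond [RHS]big_seq_cond; apply: eq_bigl => l.
  by case: (boolP (l \in s)) => //= ls; apply/negP => /eqP li; move: his; rewrite -li ls.
rewrite [X in _ = _ + X](_ : _ = \sum_(j <- s) dF j * (F i a * \prod_(l <- s | l != j) F l a)).
  rewrite /GRing.scale /= mulr_sumr addrC; congr (_ + _); first by rewrite mulrC.
  by apply: eq_bigr => j _; ring.
rewrite big_seq [RHS]big_seq; apply: eq_bigr => j js.
rewrite big_cons; case: eqP => // ij; by move: his; rewrite ij js.
Qed.

End B1.

Lemma isd_ext2 (R : realType) (f g : R -> R) (a d : R) :
  is_derive a 1 f d -> (forall b, f b = g b) -> is_derive a 1 g d.
Proof. by move=> h e; have <- : f = g by apply/funext. Qed.


Section B2.
Local Open Scope classical_set_scope.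
Variable (R : realType).

Lemma isd_abspow0 (p : nat) : (1 < p)%N ->
  is_derive (0:R) 1 (fun v : R => `|v| ^+ p) 0.
Proof.
move=> hp.
have hc : (fun h : R => h^-1 *: ((fun v : R => `|v| ^+ p) (h *: 1 + 0) - `|0:R| ^+ p))
    @ 0^' --> (0:R).
  apply/cvgr0Pnorm_lt => e e0.
  near=> h.
  have hn : h != 0 by near: h; exact: nbhs_dnbhs_neq.
  have h1 : `|h| < 1 by near: h; exact: dnbhs0_lt.
  have he : `|h| < e by near: h; exact: dnbhs0_lt.
  rewrite normr0 expr0n gtn_eqF ?(ltn_trans _ hp) // subr0 addr0.
  rewrite /GRing.scale /= mulr1 normrM normrX normr_id normfV.
  rewrite -(prednK (ltn_trans (isT : (0 < 1)%N) hp)) exprS mulrA mulVf ?normr_eq0 // mul1r.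
  apply: le_lt_trans he.
  have hp1 : (0 < p.-1)%N by rewrite -ltnS prednK // (ltn_trans _ hp).
  rewrite -(prednK hp1) exprS -[X in _ <= X]mulr1 ler_wpM2l //.
  by rewrite exprn_ile1 // ltW.
apply: DeriveDef.
  by apply/cvg_ex; exists 0; exact: hc.
exact: cvg_lim hc.
Unshelve. all: by end_near.
Qed.


Lemma isd_abspow (p : nat) (u : R) : (1 < p)%N ->
  is_derive u 1 (fun v : R => `|v| ^+ p) (p%:R * (`|u| ^+ p.-1 * Num.sg u)).
Proof.
move=> hp; have [u0|u0|->] := ltgtP u 0; last first.
- by rewrite sgr0 mulr0 mulr0; exact: isd_abspow0.
- have h' : is_derive u 1 (@GRing.exp R ^~ p) (p%:R * (`|u| ^+ p.-1 * Num.sg u)).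
    apply: DeriveDef; first exact: exprn_derivable.
    by rewrite exp_derive gtr0_sg // gtr0_norm // mulr1 /GRing.scale /= mulr1.
  apply: (near_eq_is_derive _ h').
  near=> v; rewrite gtr0_norm //=; near: v; exact: lt_nbhsr.
- have h0 : is_derive (- u) 1 (@GRing.exp R ^~ p) (p%:R * (- u) ^+ p.-1).
    apply: DeriveDef; first exact: exprn_derivable.
    by rewrite exp_derive /GRing.scale /= mulr1.
  have h1 := is_derive1_comp h0 (is_deriveNid u (1:R)).
  have h' : is_derive u 1 ((@GRing.exp R ^~ p) \o -%R) (p%:R * (`|u| ^+ p.-1 * Num.sg u)).
    by apply: is_derive_eq h1 _; rewrite ltr0_sg // ltr0_norm // mulrA.
  apply: (near_eq_is_derive _ h').
  near=> v; rewrite ltr0_norm //=; near: v; exact: lt_nbhsl.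
Unshelve. all: by end_near.
Qed.

End B2.


Section D.
Variables (R : realType) (n r pp : nat) (E : {set {set 'I_n}}) (s : {set 'I_n} -> R).
Variables (z : R -> vec R n) (zd : vec R n) (a : R).
Hypothesis Hz : forall i, is_derive a 1 (fun b => z b i) (zd i).

Lemma isd_Axr : (0 < r)%N ->
  is_derive a 1 (fun b => Axr r E s (z b)) (r%:R * dot (Axr1 r E s (z a)) zd).
Proof.
move=> hr.
have H (t : r.-tuple 'I_n) : is_derive a 1 (fun b => adj E s t * \prod_(j < r) z b (tnth t j))
   (adj E s t * \sum_(j < r) (zd (tnth t j) * \prod_(l < r | l != j) z a (tnth t l))).
  have hp := @isd_prod R _ (index_enum 'I_r) (fun j b => z b (tnth t j))
     (fun j => zd (tnth t j)) a (index_enum_uniq _) (fun j => Hz (tnth t j)).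
  have hk := is_deriveZ (adj E s t) hp.
  by apply: (isd_ext _ hk); apply/funext => b.
have hs := @isd_sum R _ (index_enum (r.-tuple 'I_n)) xpredT _ _ a (fun t _ => H t).
rewrite -(sym_sum E s hr).
by apply: (isd_ext _ hs); apply/funext => b.
Qed.


Lemma isd_Sp : (1 < pp)%N ->
  is_derive a 1 (fun b => Sp pp (z b)) (pp%:R * dot (xpow pp (z a)) zd).
Proof.
move=> hp.
have H i : is_derive a 1 (fun b => `|z b i| ^+ pp)
    (pp%:R * (`|z a i| ^+ pp.-1 * Num.sg (z a i)) * zd i).
  exact: (is_derive1_comp (isd_abspow (z a i) hp) (Hz i)).
have hs := @isd_sum R _ (index_enum 'I_n) xpredT _ _ a (fun i _ => H i).
apply: (is_derive_eq hs).
rewrite /dot mulr_sumr; apply: eq_bigr => i _; rewrite /xpow; ring.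
Qed.

Lemma isd_normp : (1 < pp)%N -> 0 < Sp pp (z a) ->
  is_derive a 1 (fun b => normp pp (z b))
    (normp pp (z a) / Sp pp (z a) * dot (xpow pp (z a)) zd).
Proof.
move=> hp hS.
have h := is_derive1_comp (is_derive1_powR (pp%:R^-1) hS) (isd_Sp hp).
apply: (is_derive_eq h).
rewrite powRB; last by apply/implyP => _; rewrite gt_eqF.
rewrite powRr1 ?ltW // normpE.
have hp0 : (pp%:R : R) != 0 by rewrite pnatr_eq0 -lt0n ltnW.
by field; rewrite hp0 gt_eqF.
Qed.

Lemma isd_fobj : (0 < r)%N -> (1 < pp)%N -> 0 < Sp pp (z a) ->
  is_derive a 1 (fun b => fobj r pp E s (z b)) (dot (gradf r pp E s (z a)) zd).
Proof.
move=> hr hp hS.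
have hN0 : 0 < normp pp (z a) by rewrite normpE powR_gt0.
have hA := isd_Axr hr.
have hN := isd_normp hp hS.
have hX : is_derive (normp pp (z a)) 1 (@GRing.exp R ^~ r) (r%:R * normp pp (z a) ^+ r.-1).
  apply: DeriveDef; first exact: exprn_derivable.
  by rewrite exp_derive /GRing.scale /= mulr1.
have hNr := @is_derive1_comp R _ (fun b => normp pp (z b)) a _ _ hX hN.
have hNr0 : ((@GRing.exp R ^~ r) \o (fun b => normp pp (z b))) a != 0.
  by rewrite /= expf_neq0 // gt_eqF.
have hV := is_deriveV hNr0 hNr.
have hM := is_deriveM hA hV.
have hK := is_deriveZ ((r.-1)`!%:R) hM.
apply: (is_derive_eq (isd_ext2 hK _)).
  move=> b; rewrite !fctE /GRing.scale /=; change ((r.-1)`!%:R * (Axr r E s (z b) / normp pp (z b) ^+ r) = fobj r pp E s (z b)); by rewrite /fobj mulrA.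
rewrite dot_gradf normp_pow ?(ltnW hp) //.
rewrite /GRing.scale /=.
have er : normp pp (z a) ^+ r = normp pp (z a) ^+ r.-1 * normp pp (z a)
  by rewrite -exprSr prednK.
have ef : (r`!%:R : R) = r%:R * (r.-1)`!%:R by rewrite -natrM -{1}(prednK hr) factS prednK.
rewrite ef er.
have hr0 : (r%:R : R) != 0 by rewrite pnatr_eq0 -lt0n.
field; rewrite !gt_eqF // exprn_gt0 //.
Qed.

End D.


Section E.
Variables (R : realType) (n : nat).
Implicit Types (x p : vec R n) (a : R).

Definition quad (k0 k1 k2 b : R) : R := k0 + k1 * b + k2 * (b * b).

Lemma isd_quad k0 k1 k2 a : is_derive a 1 (quad k0 k1 k2) (k1 + 2 * k2 * a).
Proof.
have h1 := is_derive_id a (1:R).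
have h2 := is_deriveM h1 h1.
have h3 := is_deriveZ k2 h2.
have h4 := is_deriveZ k1 h1.
have h5 := is_deriveD h4 h3.
have h6 := is_deriveD (is_derive_cst k0 a 1) h5.
apply: (is_derive_eq (isd_ext2 h6 _)).
  by move=> b; rewrite /quad !fctE /GRing.scale /= addrA.
by rewrite /GRing.scale /=; ring.
Qed.

Definition du x p a : R := - 4 * dot x p + 2 * (dot x p ^+ 2 - dot p p) * a.
Definition dD x p a : R := 2 * (dot p p - dot x p ^+ 2) * a.
Definition co1d x p a : R :=
  (du x p a * Dn x p a - uu x p a * dD x p a) / Dn x p a ^+ 2.
Definition co2d x p a : R := (4 * Dn x p a - 4 * a * dD x p a) / Dn x p a ^+ 2.

Lemma isd_co1 x p a : dot x x = 1 -> is_derive a 1 (co1 x p) (co1d x p a).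
Proof.
move=> hx.
have hu := isd_quad 4 (-4 * dot x p) (dot x p^+2 - dot p p) a.
have hD := isd_quad 4 0 (dot p p - dot x p^+2) a.
have eD b : quad 4 0 (dot p p - dot x p^+2) b = Dn x p b by rewrite /quad /Dn; ring.
have hD0 : quad 4 0 (dot p p - dot x p^+2) a != 0 by rewrite eD Dn_neq0.
have hV := is_deriveV hD0 hD.
have hM := is_deriveM hu hV.
apply: (is_derive_eq (isd_ext2 hM _)).
  move=> b; rewrite !fctE /co1 eD; congr (_ * _); rewrite /uu /quad; ring.
rewrite /co1d /du /dD /GRing.scale /= !eD.
have hD1 := Dn_neq0 p a hx.
rewrite (_ : quad 4 (-4 * dot x p) (dot x p^+2 - dot p p) a = uu x p a); last by rewrite /uu /quad; ring.
field => //.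
Qed.

Lemma isd_co2 x p a : dot x x = 1 -> is_derive a 1 (co2 x p) (co2d x p a).
Proof.
move=> hx.
have hu := isd_quad 0 4 0 a.
have hD := isd_quad 4 0 (dot p p - dot x p^+2) a.
have eD b : quad 4 0 (dot p p - dot x p^+2) b = Dn x p b by rewrite /quad /Dn; ring.
have hD0 : quad 4 0 (dot p p - dot x p^+2) a != 0 by rewrite eD Dn_neq0.
have hV := is_deriveV hD0 hD.
have hM := is_deriveM hu hV.
apply: (is_derive_eq (isd_ext2 hM _)).
  move=> b; rewrite !fctE /co2 eD; congr (_ * _); rewrite /quad; ring.
rewrite /co2d /dD /GRing.scale /= !eD.
have hD1 := Dn_neq0 p a hx.
rewrite /quad; field => //.
Qed.

Lemma co_wronsk x p a : dot x x = 1 ->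
  co1 x p a * co2d x p a - co2 x p a * co1d x p a = 4 / Dn x p a.
Proof.
move=> hx; have hD1 := Dn_neq0 p a hx.
rewrite /co1 /co2 /co1d /co2d /dD /du /uu.
move: hD1; rewrite /Dn => hD1.
by field.
Qed.

End E.


Section F.
Local Open Scope classical_set_scope.
Variable (R : realType).

Lemma isd_val (f : R -> R) (a d : R) : is_derive a 1 f d -> 'D_1 f a = d.
Proof. by case. Qed.

Lemma isd_uniq (f : R -> R) (a d1 d2 : R) :
  is_derive a 1 f d1 -> is_derive a 1 f d2 -> d1 = d2.
Proof. by move=> /isd_val <- /isd_val. Qed.

Lemma deriv_le0_left (f : R -> R) (a b d : R) : a < b -> is_derive a 1 f d ->
  (forall t, a < t -> t < b -> f t <= f a) -> d <= 0.
Proof.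
move=> ab H fmax; rewrite -(isd_val H).
have df : derivable f a 1 by case: H.
rewrite ['D_1 f a]cvg_at_rightE //.
apply: limr_le.
  rewrite -(cvg_at_rightE (fun h : R => h^-1 *: ((f \o shift a) _ - f a))) //.
  apply: cvg_trans df; apply: cvg_app.
  move=> A [e egt0 Ae]; exists e => // x xe xgt0; apply: Ae => //.
  exact/lt0r_neq0.
near=> h; apply: mulr_ge0_le0.
  by rewrite invr_ge0; apply: ltW; near: h; exists 1 => /=.
rewrite subr_le0 [_%:A]mulr1 /=.
have h0 : 0 < h by near: h; exists 1 => /=.
apply: fmax; first by rewrite ltrDr.
have : h < b - a.
  near: h; exists (b - a); first by rewrite /= subr_gt0.
  move=> h; rewrite /= distrC subr0 => /(le_lt_trans (ler_norm _)) //.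
lra.
Unshelve. all: by end_near.
Qed.

End F.


Section G.
Variables (R : realType) (n r pp : nat) (E : {set {set 'I_n}}) (s : {set 'I_n} -> R).
Implicit Types (x p : vec R n).
Hypotheses (hr0 : (0 < r)%N) (hp1 : (1 < pp)%N).

Lemma step_cd (tau eps : R) x x' : 4^-1 < tau ->
  dot x x = 1 -> dot x' x' = 1 -> gradf r pp E s x <> (fun _ => 0) ->
  let g := gradf r pp E s x in
  let p := (fun i => g i + beta r pp E s tau eps x' x * vsub x x' i) in
  0 <= dot x p /\ 0 < dot g p.
Proof.
move=> htau hx hx' hg g p.
have hp0 : (0 < pp)%N by apply: ltnW.
have orth : dot g x = 0 by apply: grad_orth.
set bt := beta r pp E s tau eps x' x.
have bt0 : 0 <= bt by rewrite /bt /beta le_max lexx.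
set d := vsub x x'.
have ep : p = (fun i => 1 * g i + bt * d i) by apply/funext => i; rewrite mul1r.
have ed : d = (fun i => 1 * x i + (-1) * x' i).
  by apply/funext => i; rewrite /d /vsub mul1r mulN1r.
have gg0 : 0 < dot g g.
  rewrite lt_def dot_ge0 andbT; apply/eqP => h; apply: hg; apply/funext => i.
  exact: dot_eq0 h i.
split.
  rewrite ep dot_lin2 (dotC x g) orth mulr0 add0r ed dot_lin2 hx.
  have := dot_ge0 (fun i => 1 * x i + (-1) * x' i); rewrite dot_quad hx hx' => hq.
  apply: mulr_ge0 => //; lra.
rewrite ep dot_lin2 mul1r.
have [hb|hb] := leP bt 0.
  have -> : bt = 0 by apply/eqP; rewrite eq_le hb bt0.
  by rewrite mul0r addr0.
clear hb; rewrite /bt /beta /=.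
set y := vsub (gradf r pp E s x) (gradf r pp E s x').
set dy := dot (vsub x x') y.
case: ifP => _; last by rewrite maxxx mul0r addr0.
set E0 := (X in Num.max 0 X).
rewrite maxElt; case: ifP => hE; last by rewrite mul0r addr0.
have dy0 : dy != 0.
  by apply: contraTneq hE => dy0; rewrite /E0 dy0 invr0 mulr0 ltxx.
rewrite /E0.
have e1 : dot (vsub x x') (gradf r pp E s x) = dot g d by rewrite dotC.
have e2 : dot y (gradf r pp E s x) = dot g y by rewrite dotC.
rewrite e1 e2.
have hQ := dot_ge0 (fun i => 1 * g i + (-(2 * tau * (dot g d / dy))) * y i).
rewrite dot_quad in hQ.
have htau0 : 0 < tau by apply: lt_trans htau; rewrite invr_gt0.
have key : 4 * tau * (dot g g + (tau * dot y y / dy * dot g d - dot g y) / dy * dot g d)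
  = (4 * tau - 1) * dot g g +
    (1 ^+ 2 * dot g g + 2 * 1 * - (2 * tau * (dot g d / dy)) * dot g y +
       (- (2 * tau * (dot g d / dy))) ^+ 2 * dot y y).
  by field.
have h40 : (0:R) < 4 by lra.
have h4 : 0 < 4 * tau - 1.
  have : 1 < 4 * tau.
    by rewrite -(ltr_pdivrMl _ _ h40) mulr1.
  lra.
rewrite -(pmulr_rgt0 _ (mulr_gt0 h40 htau0)) key.
by apply: ltr_pwDl => //; apply: mulr_gt0.
Qed.

End G.


Section H.
Variables (R : realType) (n r pp : nat) (E : {set {set 'I_n}}) (s : {set 'I_n} -> R).
Implicit Types (x p : vec R n).
Hypotheses (hr0 : (0 < r)%N) (hp1 : (1 < pp)%N).

Definition yd x p a : vec R n := fun i => co1d x p a * x i + co2d x p a * p i.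

Lemma isd_phi x p (a : R) : dot x x = 1 ->
  is_derive a 1 (fun b => fobj r pp E s (xnext x p b))
    (dot (gradf r pp E s (xnext x p a)) (yd x p a)).
Proof.
move=> hx.
have Hz : forall i, is_derive a 1 (fun b => xnext x p b i) (yd x p a i).
  move=> i.
  have h1 := is_deriveZ (x i) (isd_co1 p a hx).
  have h2 := is_deriveZ (p i) (isd_co2 p a hx).
  have h3 := is_deriveD h1 h2.
  apply: (is_derive_eq (isd_ext2 h3 _)).
    move=> b; rewrite xnextE !fctE.
    by change (x i * co1 x p b + p i * co2 x p b = co1 x p b * x i + co2 x p b * p i); ring.
  rewrite /yd; change (x i * co1d x p a + p i * co2d x p a = co1d x p a * x i + co2d x p a * p i); ring.

exact: (isd_fobj E s Hz hr0 hp1 (Sp_gt0 _ (unit_next p a hx))).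
Qed.

End H.


Section I.
Local Open Scope classical_set_scope.
Variables (R : realType) (n r pp : nat) (E : {set {set 'I_n}}) (s : {set 'I_n} -> R).
Implicit Types (x p : vec R n).
Hypotheses (hr0 : (0 < r)%N) (hp1 : (1 < pp)%N).

Lemma co_at0 x p : co1d x p 0 = - dot x p /\ co2d x p 0 = 1.
Proof.
have e : Dn x p 0 = 4 by rewrite /Dn; ring.
have h4 : (4:R) != 0 by apply/eqP; lra.
rewrite /co1d /co2d e /du /dD /uu; split; field => //.
Qed.

Lemma wolfe_exist (c1 c2 : R) x p : 0 < c1 -> c1 < c2 -> c2 < 1 -> dot x x = 1 ->
  0 <= dot x p -> 0 < dot (gradf r pp E s x) p ->
  exists a : R, 0 < a /\ wolfe r pp E s c1 c2 x p a.
Proof.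
move=> hc1 hc12 hc2 hx hc hd.
have hp0 : (0 < pp)%N by apply: ltnW.
set g := gradf r pp E s x.
set dl := dot g p.
set phi := fun b => fobj r pp E s (xnext x p b).
set phi0 := fobj r pp E s x.
set dphi := fun b => dot (gradf r pp E s (xnext x p b)) (yd x p b).
have hphi (b : R) : is_derive b 1 phi (dphi b) by exact: isd_phi.
set h := fun b => phi b + quad (- phi0) (- (c1 * dl)) 0 b.
have hh (b : R) : is_derive b 1 h (dphi b + (- (c1 * dl) + 2 * 0 * b)).
  have h1 := is_deriveD (hphi b) (isd_quad (- phi0) (- (c1 * dl)) 0 b).
  by apply: (isd_ext2 h1) => t; rewrite !fctE.
have h00 : h 0 = 0.
  by rewrite /h /phi xnext0 /quad -/phi0; ring.
have dphi0 : dphi 0 = dl.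
  have [e1 e2] := co_at0 x p.
  rewrite /dphi xnext0 /yd e1 e2 dot_lin2 -/g.
  rewrite (_ : dot g x = 0) ?mulr0 ?add0r ?mul1r //.
  exact: grad_orth.
have hM (b : R) : phi b <= Mb r E s by apply: fobj_bound => //; apply: unit_next.
have hcd : 0 < c1 * dl by apply: mulr_gt0.
set A := (`|Mb r E s - phi0| + 1) / (c1 * dl).
have A0 : 0 < A by apply: divr_gt0 => //; apply: ltr_pwDr => //.
have hA : h A < 0.
  rewrite /h /quad.
  have eA : c1 * dl * A = `|Mb r E s - phi0| + 1 by rewrite /A mulrC divfK // gt_eqF.
  have := hM A; have := ler_norm (Mb r E s - phi0).
  have -> : phi A + (- phi0 + - (c1 * dl) * A + 0 * (A * A)) = phi A - phi0 - c1 * dl * A by ring.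
  rewrite eA; lra.
have hcont : {within `[0, A], continuous h}.
  by apply: derivable_within_continuous => t _; case: (hh t).
have [m hm hmax] := EVT_max (ltW A0) hcont.
have hm0 : h 0 <= h m by apply: hmax; rewrite in_itv /= lexx ltW.
have mA : m != A.
  by apply: contraTneq hm0 => ->; rewrite h00 -ltNge.
have m0 : m != 0.
  apply/eqP => em; rewrite em in hmax.
  have hle : forall t, 0 < t -> t < A -> h t <= h 0.
    by move=> t t0 tA; apply: hmax; rewrite in_itv /= !ltW.
  have := deriv_le0_left A0 (hh 0) hle.
  have : c1 * dl < dl by rewrite gtr_pMl // (lt_trans hc12).
  rewrite dphi0; lra.
have hmi : m \in `]0, A[%R.
  move: hm; rewrite !in_itv /= => /andP [h1 h2].
  by rewrite !lt_neqAle h1 h2 eq_sym m0 mA.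
have hd0 := derive1_at_max (ltW A0) (fun t _ => let: DeriveDef d _ := hh t in d) hmi
  (fun t ht => hmax t (subset_itv_oo_cc ht)).
have edm := isd_uniq (hh m) hd0.
have m_pos : 0 < m by move: hmi; rewrite in_itv /= => /andP [].
exists m; split => //; split.
  move: hm0; rewrite h00 /h /quad /phi -/phi0 -/g -/dl.
  have -> : c1 * m * dl = c1 * dl * m by ring.
  lra.
rewrite -/g -/dl.
set y := xnext x p m; set G := gradf r pp E s y.
have hy : dot y y = 1 by apply: unit_next.
have orth : dot G y = 0 by apply: grad_orth.
rewrite /y xnextE dot_lin2 -/y in orth.
have edm' : co1d x p m * dot G x + co2d x p m * dot G p = c1 * dl.
  by rewrite -dot_lin2; move: edm; rewrite /dphi /yd -/y -/G; lra.
have wr := co_wronsk p m hx.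
have hD := Dn_neq0 p m hx.
have e3 : dot G p * (4 / Dn x p m) = co1 x p m * (c1 * dl).
  rewrite -wr -edm'.
  have -> : co1 x p m * (co1d x p m * dot G x + co2d x p m * dot G p) =
     co1 x p m * (co1d x p m * dot G x + co2d x p m * dot G p) -
     co1d x p m * (co1 x p m * dot G x + co2 x p m * dot G p) by rewrite orth; ring.
  ring.
have e4 : dot G p * 4 = uu x p m * (c1 * dl).
  move: e3; rewrite /co1 => e3.
  apply: (mulIf hD); move: e3.
  have -> : dot G p * 4 * Dn x p m = dot G p * (4 / Dn x p m) * Dn x p m ^+ 2
    by field.
  by move=> ->; field.
have hcs := cauchy1 p hx.
have hu4 : uu x p m <= 4.
  have h1 : 0 <= m * dot x p by apply: mulr_ge0 => //; apply: ltW.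
  have h2 : 0 <= m ^+ 2 * (dot p p - dot x p ^+ 2) by apply: mulr_ge0; rewrite ?sqr_ge0 ?subr_ge0.
  rewrite /uu; nra.
have h5 : uu x p m * (c1 * dl) <= 4 * (c1 * dl) by rewrite ler_wpM2r // ltW.
have h6 : c1 * dl < c2 * dl by rewrite ltr_pM2r.
lra.
Qed.

End I.

Theorem theorem3p5 (R : realType) (n r pp : nat)
  (E : {set {set 'I_n}}) (s : {set 'I_n} -> R)
  (hr : (2 <= r)%N) (hp : (2 <= pp)%N)
  (hE : forall e, e \in E -> #|e| = r)
  (hs : forall e, e \in E -> 0 < s e)
  (c1 c2 tau eps : R)
  (hc1 : 0 < c1) (hc12 : c1 < c2) (hc2 : c2 < 1)
  (htau1 : 4^-1 < tau) (htau2 : tau < 1) (heps : 0 < eps)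
  (xs ps : nat -> 'I_n -> R) (als : nat -> R) (k : nat)
  (hrun : csrh_run r pp E s c1 c2 tau eps xs ps als k)
  (hg : gradf r pp E s (xs k) <> (fun _ => 0)) :
  exists a : R, 0 < a /\ wolfe r pp E s c1 c2 (xs k) (ps k) a.
Proof.
have hr0 : (0 < r)%N by apply: leq_trans hr.
have hp0 : (0 < pp)%N by apply: ltnW.
case: hrun => hx0 [hps0 hstep].
have unit j : (j <= k)%N -> dot (xs j) (xs j) = 1.
  elim: j => [|j IH] hj; first exact: hx0.
  have [_ _ -> _] := hstep j hj.
  by apply: unit_next; apply: IH; apply: ltnW.
have hx := unit k (leqnn k).
have [hc hd] : 0 <= dot (xs k) (ps k) /\ 0 < dot (gradf r pp E s (xs k)) (ps k).
  move: hx hg hstep unit; case: k => [|j] hx hg hstep unit.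
    rewrite hps0 dotC grad_orth // lexx; split => //.
    rewrite lt_def dot_ge0 andbT; apply/eqP => h; apply: hg; apply/funext => i.
    exact: dot_eq0 h i.
  have [_ _ _ ep] := hstep j (ltnSn j).
  rewrite ep.
  exact: (@step_cd R n r pp E s hr0 hp tau eps (xs j.+1) (xs j) htau1 hx (unit j (leqnSn j)) hg).
exact: wolfe_exist.
Qed.
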